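(* Let $n\ge3$, let $S_n$ act on $V=\mathbb{C}^n$ by permutations, fix $a,b,c\in\mathbb{C}$, and let $*\in\{L,C\}$. For $g\in S_n$ let $\phi^*_g$ be the $g$-component of $\phi(\kappa^*_{\mathrm{tri}},\kappa^L_{\mathrm{tri}})$. If $g$ is not a $5$-cycle, then $\phi^*_g\equiv0$.
   Context: $S_n$ acts by $\sigma e_i=e_{\sigma(i)}$; $V^g$ is the fixed space of $g$. $\kappa^L_{\mathrm{tri}}$ is the linear 2-cochain supported on 3-cycles with $\kappa^L_{(ijk)}(e_i,e_j)=\kappa^L_{(ijk)}(e_j,e_k)=\kappa^L_{(ijk)}(e_k,e_i)=a(e_i+e_j+e_k)+b\sum_{l\notin\{i,j,k\}}e_l$ and $\kappa^L_{(ijk)}(e_l,e_m)=0$ whenever $e_l$ or $e_m$ lies in $V^{(ijk)}$; $\kappa^C_{\mathrm{tri}}$ is the constant 2-cochain supported on 3-cycles with $\kappa^C_{(ijk)}(e_i,e_j)=\kappa^C_{(ijk)}(e_j,e_k)=\kappa^C_{(ijk)}(e_k,e_i)=c$ and $\kappa^C_{(ijk)}(e_l,e_m)=0$ whenever $e_l$ or $e_m$ lies in $V^{(ijk)}$. For $\alpha$ linear or constant and $\beta$ linear 2-cochains ($\alpha=\sum_g\alpha_gg$ etc.), $\phi(\alpha,\beta)=\sum_g\phi_gg$ with $\phi_g=\sum_{xy=g}\phi_{x,y}$, $\phi_{x,y}(v_1,v_2,v_3)=\alpha_x(v_1+yv_1,\beta_y(v_2,v_3))+\alpha_x(v_2+yv_2,\beta_y(v_3,v_1))+\alpha_x(v_3+yv_3,\beta_y(v_1,v_2))$.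 *)

(* Defs.v *)
(* V = C^n with C = R[i] (complex numbers over a real field R;
   R = the real numbers gives C = the complex numbers). *)
From mathcomp Require Import all_boot all_algebra all_fingroup.
From mathcomp Require Import reals.
From mathcomp.real_closed Require Import complex.

Set Implicit Arguments.
Unset Strict Implicit.
Unset Printing Implicit Defensive.

Import GRing.Theory.
Local Open Scope ring_scope.

Section Defs.
Variables (R : realType) (n : nat).
Local Notation C := R[i].
Local Notation V := 'rV[C]_n.

Definition vcoord (v : V) (j : 'I_n) : C := v ord0 j.

(* permutation action  sigma e_i = e_(sigma i), i.e. (sigma v)_j = v_(sigma^-1 j) *)
Definition pact (s : 'S_n) (v : V) : V := \row_j v ord0 ((s^-1)%g j).

(* the support (moved points) of g; its complement indexes the e_l in V^g *)
Definition moved (g : 'S_n) : {set 'I_n} := [set x | g x != x].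

Definition is_kcycle (k : nat) (g : 'S_n) : bool :=
  [exists i : 'I_n, [forall j : 'I_n, (g j != j) ==> (j \in porbit g i)]
                    && (#|porbit g i| == k)].

(* "x y = g" in S_n, where x y is the composite  v |-> x (y v)  (y first) *)
Definition comp_eq (x y g : 'S_n) : bool := [forall i, x (y i) == g i].

(* For a 3-cycle g = (i j k) (i |-> j |-> k |-> i) and p, q moved by g:
   +1 on (e_i,e_j),(e_j,e_k),(e_k,e_i), -1 on the reversed pairs (the cochain
   is alternating), 0 on (e_p,e_p). *)
Definition tri_sign (g : 'S_n) (p q : 'I_n) : C :=
  if g p == q then 1 else if g q == p then -1 else 0.

Definition tri_pair (g : 'S_n) (p q : 'I_n) : bool :=
  [&& is_kcycle 3 g, p \in moved g & q \in moved g].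

Definition tri_vec (a b : C) (g : 'S_n) : V :=
  \row_l (if l \in moved g then a else b).

Definition kappaL_basis (a b : C) (g : 'S_n) (p q : 'I_n) : V :=
  if tri_pair g p q then tri_sign g p q *: tri_vec a b g else 0.

Definition kappaC_basis (c : C) (g : 'S_n) (p q : 'I_n) : C :=
  if tri_pair g p q then tri_sign g p q * c else 0.

Definition kappaL (a b : C) (g : 'S_n) (v w : V) : V :=
  \sum_(p < n) \sum_(q < n) (vcoord v p * vcoord w q) *: kappaL_basis a b g p q.

Definition kappaC (c : C) (g : 'S_n) (v w : V) : C :=
  \sum_(p < n) \sum_(q < n) (vcoord v p * vcoord w q) * kappaC_basis c g p q.

Definition phi_xy (W : zmodType) (al : 'S_n -> V -> V -> W)
    (be : 'S_n -> V -> V -> V) (x y : 'S_n) (v1 v2 v3 : V) : W :=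
  al x (v1 + pact y v1) (be y v2 v3)
  + al x (v2 + pact y v2) (be y v3 v1)
  + al x (v3 + pact y v3) (be y v1 v2).

Definition phi_g (W : zmodType) (al : 'S_n -> V -> V -> W)
    (be : 'S_n -> V -> V -> V) (g : 'S_n) (v1 v2 v3 : V) : W :=
  \sum_(x : 'S_n) \sum_(y : 'S_n | comp_eq x y g) phi_xy al be x y v1 v2 v3.

End Defs.

(* Main.v *)
Require Import Defs.
From mathcomp Require Import all_boot all_algebra all_fingroup.
From mathcomp Require Import reals.
From mathcomp.real_closed Require Import complex.
From mathcomp Require Import ring.
Set Implicit Arguments.
Unset Strict Implicit.
Unset Printing Implicit Defensive.
Import GRing.Theory.
Local Open Scope ring_scope.

Section Helpers.
Variables (R : realType) (n : nat).
Local Notation C := R[i].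
Local Notation V := 'rV[C]_n.

Lemma kcycle3_spec (x : 'S_n) : is_kcycle 3 x -> exists i,
  [/\ x (x (x i)) = i, uniq [:: i; x i; x (x i)] &
      forall j, x j != j -> j \in [:: i; x i; x (x i)]].
Proof.
case/existsP => i /andP [/forallP H /eqP c3]; exists i.
have E := iter_porbit x i; rewrite c3 /= in E.
have U := uniq_traject_porbit x i; rewrite c3 /= in U.
split => // j hj; have := implyP (H j) hj; by rewrite porbit_traject c3.
Qed.

Lemma cyc3 (x : 'S_n) k : is_kcycle 3 x -> x k != k ->
  [/\ x (x (x k)) = k, x k != k, x (x k) != k, x (x k) != x k &
      forall j, x j != j -> [|| j == k, j == x k | j == x (x k)]].
Proof.
move=> h3 hk; have [i [E U M]] := kcycle3_spec h3.
have := M k hk; rewrite !inE => /or3P [] /eqP ->;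
  move: U; rewrite /= !inE negb_or => /andP [/andP [u1 u2] /andP [u3 _]];
  rewrite ?E; (split; [done | | | | ]);
  try (by rewrite eq_sym); try done;
  move=> j /M; rewrite !inE; by case/or3P => ->; rewrite ?orbT.
Qed.


Definition kb (g : 'S_n) (p q : 'I_n) : C :=
  if tri_pair g p q then tri_sign R g p q else 0.
Definition Bf (g : 'S_n) (v w : V) : C :=
  \sum_(p < n) \sum_(q < n) (vcoord v p * vcoord w q) * kb g p q.

Lemma kappaL_E a b g (v w : V) : kappaL a b g v w = Bf g v w *: tri_vec a b g.
Proof.
rewrite /kappaL /Bf scaler_suml; apply: eq_bigr => p _.
rewrite scaler_suml; apply: eq_bigr => q _.
rewrite /kappaL_basis /kb; case: ifP => _; by rewrite ?scaler0 ?mulr0 ?scale0r // scalerA.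
Qed.

Lemma kappaC_E c g (v w : V) : kappaC c g v w = Bf g v w * c.
Proof.
rewrite /kappaC /Bf mulr_suml; apply: eq_bigr => p _.
rewrite mulr_suml; apply: eq_bigr => q _.
rewrite /kappaC_basis /kb; case: ifP => _; by rewrite ?mulr0 ?mul0r // mulrA.
Qed.

Lemma Bf_non3 g v w : ~~ is_kcycle 3 g -> Bf g v w = 0.
Proof.
move=> h; rewrite /Bf big1 // => p _; rewrite big1 // => q _.
by rewrite /kb /tri_pair (negbTE h) mulr0.
Qed.

Lemma sum3 (F : 'I_n -> C) k1 k2 k3 : k1 != k2 -> k1 != k3 -> k2 != k3 ->
  (forall j, [&& j != k1, j != k2 & j != k3] -> F j = 0) ->
  \sum_j F j = F k1 + F k2 + F k3.
Proof.
move=> h12 h13 h23 H.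
rewrite (bigD1 k1) //= (bigD1 k2) 1?eq_sym //= (bigD1 k3) /=; last first.
  by rewrite eq_sym h13 eq_sym h23.
rewrite big1 ?addr0 ?addrA // => j; rewrite -andbA; exact: H.
Qed.

Lemma Bf3 x k k1 k2 (v w : V) : is_kcycle 3 x -> x k != k -> x k = k1 -> x k1 = k2 ->
  Bf x v w = vcoord v k * (vcoord w k1 - vcoord w k2)
           + vcoord v k1 * (vcoord w k2 - vcoord w k)
           + vcoord v k2 * (vcoord w k - vcoord w k1).
Proof.
move=> h3 hk e1 e2; have [E n1 n2 n3 M] := cyc3 h3 hk.
rewrite e1 e2 in E n1 n2 n3 M.
have e3 : x k2 = k by [].
have Hmv j : x j != j -> [|| j == k, j == k1 | j == k2] by apply: M.
have nm j : [&& j != k, j != k1 & j != k2] -> x j = j.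
  move=> /and3P [j1 j2 j3]; apply/eqP; apply: contraTT isT => /Hmv.
  by rewrite (negbTE j1) (negbTE j2) (negbTE j3).
have d1 : k != k1 by rewrite eq_sym.
have d2 : k != k2 by rewrite eq_sym.
have d3 : k1 != k2 by rewrite eq_sym.
rewrite /Bf (sum3 d1 d2 d3); last first.
  move=> j hj; rewrite big1 // => q _.
  by rewrite /kb /tri_pair /moved inE nm // eqxx andbF mulr0.
have F q p : [&& q != k, q != k1 & q != k2] -> vcoord v p * vcoord w q * kb x p q = 0.
  by move=> hq; rewrite /kb /tri_pair [q \in _]inE nm // eqxx !andbF mulr0.
rewrite !(sum3 d1 d2 d3); try by move=> j hj; apply: F.
rewrite /kb /tri_pair h3 /moved !inE e1 e2 e3 /tri_sign e1 e2 e3 /=.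
rewrite !eqxx !(negbTE n1) !(negbTE n2) !(negbTE n3) !(negbTE d1) !(negbTE d2) !(negbTE d3) /=.
ring.
Qed.


Lemma vcoordD (u w : V) j : vcoord (u + w) j = vcoord u j + vcoord w j.
Proof. by rewrite /vcoord mxE. Qed.
Lemma vcoordZ s (w : V) j : vcoord (s *: w) j = s * vcoord w j.
Proof. by rewrite /vcoord mxE. Qed.
Lemma vcoord_pact s (v : V) j : vcoord (pact s v) j = vcoord v (s^-1%g j).
Proof. by rewrite /vcoord /pact mxE. Qed.
Lemma vcoord_tri (a b : C) (g : 'S_n) j : vcoord (tri_vec a b g) j = if g j != j then a else b.
Proof. by rewrite /vcoord /tri_vec mxE inE. Qed.
Lemma invP (y : 'S_n) z m : y z = m -> (y^-1)%g m = z.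
Proof. by move<-; rewrite permK. Qed.

Lemma Bf_scal g v w s : Bf g v (s *: w) = s * Bf g v w.
Proof.
rewrite /Bf mulr_sumr; apply: eq_bigr => p _; rewrite mulr_sumr.
by apply: eq_bigr => q _; rewrite vcoordZ; ring.
Qed.

Lemma neq_mv (y : 'S_n) a0 b0 : y a0 != a0 -> y b0 = b0 -> a0 != b0.
Proof. by move=> ha hb; apply/eqP => e; move: ha; rewrite e hb eqxx. Qed.

End Helpers.

Lemma porbit_iter (T : finType) (s : {perm T}) x k : (0 < k)%N ->
  iter k s x = x -> porbit s x =i traject s x k.
Proof.
move=> k0 E y; apply/idP/idP.
- case/porbitP => i ->; rewrite permX.
  have: looping s x k by rewrite /looping E; case: k k0 {E} => [|k] //= _; rewrite inE eqxx.
  by move/loopingP.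
- by case/trajectP => i _ ->; rewrite -permX mem_porbit.
Qed.

Lemma five n (x y g : 'S_n) m : comp_eq x y g -> is_kcycle 3 x -> is_kcycle 3 y ->
  x m != m -> y m != m -> y (x m) = x m -> y (x (x m)) = x (x m) -> is_kcycle 5 g.
Proof.
move=> /forallP hg hx hy hm hym f1 f2.
have gE j : g j = x (y j) by rewrite (eqP (hg j)).
have [E3 n1 n2 n3 M] := cyc3 hx hm.
have [F3 o1 o2 o3 N] := cyc3 hy hym.
move: E3 n1 n2 n3 M F3 o1 o2 o3 N f1 f2.
set x1 := x m; set x2 := x x1; set y1 := y m; set y2 := y y1.
move=> E3 n1 n2 n3 M F3 o1 o2 o3 N f1 f2.
have my1 : y y1 != y1 := o3.
have xy1 : x y1 = y1.
  apply/eqP; apply: contraTT isT => /M /or3P [] /eqP e.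
  - by move: o1; rewrite e eqxx.
  - by move: (neq_mv my1 f1); rewrite e eqxx.
  - by move: (neq_mv my1 f2); rewrite e eqxx.
have xy2 : x y2 = y2.
  apply/eqP; apply: contraTT isT => /M /or3P [] /eqP e.
  - by move: o2; rewrite e eqxx.
  - have : y y2 != y2 by rewrite F3 eq_sym.
    by move/neq_mv => /(_ _ f1); rewrite e eqxx.
  - have : y y2 != y2 by rewrite F3 eq_sym.
    by move/neq_mv => /(_ _ f2); rewrite e eqxx.
have g0 : g m = y1 by rewrite gE xy1.
have g1 : g y1 = y2 by rewrite gE xy2.
have g2 : g y2 = x1 by rewrite gE F3.
have g3 : g x1 = x2 by rewrite gE f1.
have g4 : g x2 = m by rewrite gE f2 E3.
have it : iter 5 g m = m by rewrite /= g0 g1 g2 g3 g4.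
have tr : traject g m 5 = [:: m; y1; y2; x1; x2] by rewrite /= g0 g1 g2 g3.
have my2 : y y2 != y2 by rewrite F3 eq_sym.
have U : uniq [:: m; y1; y2; x1; x2].
  rewrite /= !inE !negb_or.
  rewrite (eq_sym m y1) o1 (eq_sym m y2) o2 (eq_sym y1 y2) o3.
  rewrite (eq_sym m x1) n1 (eq_sym m x2) n2 (eq_sym x1 x2) n3.
  by rewrite !(neq_mv my1 f1) !(neq_mv my1 f2) !(neq_mv my2 f1) !(neq_mv my2 f2).
apply/existsP; exists m; apply/andP; split.
- apply/forallP => j; apply/implyP => hj.
  rewrite (porbit_iter _ it) // tr !inE.
  case hyj: (y j != j).
  + by move: (N j hyj) => /or3P [] ->; rewrite ?orbT.
  + move/negbFE/eqP: hyj => hyj; move: hj; rewrite gE hyj => /M /or3P [] ->; by rewrite ?orbT.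
- by rewrite (eq_card (porbit_iter _ it)) // (card_uniqP _) tr.
Qed.

Definition SS (R : realType) n (x y : 'S_n) (a b : R[i]) (v1 v2 v3 : 'rV[R[i]]_n) : R[i] :=
  Bf y v2 v3 * Bf x (v1 + pact y v1) (tri_vec a b y)
  + Bf y v3 v1 * Bf x (v2 + pact y v2) (tri_vec a b y)
  + Bf y v1 v2 * Bf x (v3 + pact y v3) (tri_vec a b y).

Lemma two (R : realType) n (x y : 'S_n) k (a b : R[i]) v1 v2 v3 :
  is_kcycle 3 x -> is_kcycle 3 y -> x k != k -> y k = k ->
  y (x k) != x k -> y (x (x k)) != x (x k) -> SS x y a b v1 v2 v3 = 0.
Proof.
move=> hx hy hk yk hp1 hp2.
have [E3 n1 n2 n3 M] := cyc3 hx hk.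
have [F3 o1 o2 o3 N] := cyc3 hy hp1.
have := N _ hp2; rewrite (negbTE n3) /=.
move: E3 n1 n2 n3 M F3 o1 o2 o3 N hp1 hp2.
set p1 := x k; set p2 := x p1.
move=> E3 n1 n2 n3 M F3 o1 o2 o3 N hp1 hp2.
have e1 : x k = p1 by [].
have e2 : x p1 = p2 by [].
rewrite /SS !(Bf3 _ _ hx hk e1 e2) !vcoordD !vcoord_tri yk eqxx hp1 hp2 /= !vcoord_pact.
rewrite (invP yk).
case/orP => /eqP ey.
- set l := y p2.
  have ey1 : y p1 = p2 by rewrite ey.
  have ey2 : y l = p1 by rewrite /l -{1}ey1.
  rewrite !(Bf3 _ _ hy hp1 ey1 (erefl l)) (invP ey1) (invP ey2).
  ring.
- set l := y p1.
  have ey1 : y l = p2 by rewrite ey.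
  have ey2 : y p2 = p1 by rewrite ey.
  rewrite !(Bf3 _ _ hy hp1 (erefl l) ey1) (invP ey1) (invP ey2).
  ring.
Qed.

Lemma flat (R : realType) n (x y : 'S_n) k (a b : R[i]) u :
  is_kcycle 3 x -> x k != k -> (y (x k) != x k) = (y k != k) ->
  (y (x (x k)) != x (x k)) = (y k != k) -> Bf x u (tri_vec a b y) = 0.
Proof.
move=> hx hk h1 h2.
rewrite (Bf3 _ _ hx hk (erefl _) (erefl _)) !vcoord_tri h1 h2.
by case: (y k != k); ring.
Qed.

Lemma key (R : realType) n (x y g : 'S_n) (a b : R[i]) v1 v2 v3 :
  comp_eq x y g -> ~~ is_kcycle 5 g -> SS x y a b v1 v2 v3 = 0.
Proof.
move=> hg h5.
case hx3: (is_kcycle 3 x); last by rewrite /SS !(Bf_non3 _ _ (negbT hx3)) !mulr0 !addr0.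
case hy3: (is_kcycle 3 y); last by rewrite /SS !(Bf_non3 _ _ (negbT hy3)) !mul0r !addr0.
have [i [_ U _]] := kcycle3_spec hx3.
have hk : x i != i by move: U; rewrite /= !inE negb_or eq_sym => /andP [/andP [] ] .
have [E3 n1 n2 n3 M] := cyc3 hx3 hk.
have hk1 : x (x i) != x i by [].
have hk2 : x (x (x i)) != x (x i) by rewrite E3 eq_sym.
have [E3' _ _ _ _] := cyc3 hx3 hk1.
move: E3 E3' hk1 hk2; set k1 := x i; set k2 := x k1 => E3 E3' hk1 hk2.
case c0: (y i != i); case c1: (y k1 != k1); case c2: (y k2 != k2).
- by rewrite /SS !(flat _ _ _ hx3 hk) ?c0 ?c1 ?c2 // !mulr0 !addr0.
- apply: (two _ _ _ _ _ hx3 hy3 hk2); rewrite ?E3 ?E3' ?c0 ?c1 //; exact/eqP/negbFE.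
- apply: (two _ _ _ _ _ hx3 hy3 hk1); rewrite ?E3 ?E3' ?c0 ?c2 //; exact/eqP/negbFE.
- case/negP: h5; apply: (five hg hx3 hy3 hk c0); apply/eqP/negbFE; by rewrite ?c1 ?c2.
- apply: (two _ _ _ _ _ hx3 hy3 hk); rewrite ?E3 ?E3' ?c1 ?c2 //; exact/eqP/negbFE.
- case/negP: h5; apply: (five hg hx3 hy3 hk1 c1); apply/eqP/negbFE; by rewrite ?E3 ?E3' ?c0 ?c2.
- case/negP: h5; apply: (five hg hx3 hy3 hk2 c2); apply/eqP/negbFE; by rewrite ?E3 ?E3' ?c0 ?c1.
- by rewrite /SS !(flat _ _ _ hx3 hk) ?c0 ?c1 ?c2 // !mulr0 !addr0.
Qed.

Unset Implicit Arguments.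
Set Strict Implicit.

Theorem proposition7p2 (R : realType) (n : nat) (hn : (3 <= n)%N)
    (a b c : R[i]) (g : 'S_n) :
  ~~ is_kcycle 5 g ->
  (forall v1 v2 v3 : 'rV[R[i]]_n,
     phi_g (@kappaL R n a b) (@kappaL R n a b) g v1 v2 v3 = 0) /\
  (forall v1 v2 v3 : 'rV[R[i]]_n,
     phi_g (@kappaC R n c) (@kappaL R n a b) g v1 v2 v3 = 0).
Proof.
move=> h5; split => v1 v2 v3; rewrite /phi_g big1 // => x _; rewrite big1 // => y hxy.
- rewrite /phi_xy !kappaL_E !Bf_scal -!scalerDl.
  by have := key a b v1 v2 v3 hxy h5; rewrite /SS => ->; rewrite scale0r.
- rewrite /phi_xy !kappaC_E !kappaL_E !Bf_scal -!mulrDl.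
  by have := key a b v1 v2 v3 hxy h5; rewrite /SS => ->; rewrite mul0r.
Qed.
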